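(* Let $\mathcal N$ be an occurrence net, $C$ a cut of $\mathcal N$ and $c\in C$. Then $\mathit{LKC}(c)\subseteq\lfloor C\rfloor$, where $\mathit{LKC}(c)=\{p\in\mathcal P\mid p\not<c\ \text{and}\ t<c\text{ for all }t\in{}^\bullet p\}$.
   Context: A Petri net $(\mathcal P,\mathcal T,\mathcal F,\mathit{In})$ has disjoint places $\mathcal P$ and transitions $\mathcal T$, a flow relation $\mathcal F$ that is a multiset over $(\mathcal P\times\mathcal T)\cup(\mathcal T\times\mathcal P)$, and a finite multiset $\mathit{In}$ over $\mathcal P$; ${}^\bullet x(y)=\mathcal F(y,x)$, $x^\bullet(y)=\mathcal F(x,y)$, and every transition has finite nonempty pre- and postcondition. Let $<$ be the transitive closure of $\{(x,y)\mid\mathcal F(x,y)>0\}$ and $\le$ its reflexive-transitive closure; the causal past of a set $S$ of nodes is $\lfloor S\rfloor=\{y\mid y\le x\text{ for some }x\in S\}$. Nodes $x,y$ are in conflict if there is a place $p\ne x,y$ and distinct transitions $t_1,t_2\in p^\bullet$ with $t_1\le x$ and $t_2\le y$; they are concurrent if neither $x\le y$ nor $y\le x$ nor in conflict. An occurrence net is a Petri net in which pre- and postconditions of transitions are sets, every place has at most one incoming transition, $\mathit{In}=\{p\mid{}^\bullet p=\emptyset\}$, $\mathcal F^{-1}$ is well-founded, and no transition is in conflict with itself. A cut is a maximal set of pairwise concurrent places. *)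

(* Defs.v *)
From Stdlib Require Import Relations List.

Record PetriNet := {
  place : Type;
  trans : Type;
  (* flow relation: a multiset over (P x T) u (T x P) *)
  Fpt : place -> trans -> nat;
  Ftp : trans -> place -> nat;
  In : place -> nat;
  In_finite : exists l : list place, forall p, In p > 0 -> List.In p l;
  pre_finite : forall t, exists l : list place, forall p, Fpt p t > 0 -> List.In p l;
  post_finite : forall t, exists l : list place, forall p, Ftp t p > 0 -> List.In p l;
  pre_nonempty : forall t, exists p, Fpt p t > 0;
  post_nonempty : forall t, exists p, Ftp t p > 0
}.

Definition node (N : PetriNet) : Type := (place N + trans N)%type.

Definition F (N : PetriNet) (x y : node N) : nat :=
  match x, y with
  | inl p, inr t => Fpt N p t
  | inr t, inl p => Ftp N t p
  | _, _ => 0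
  end.

Definition flow (N : PetriNet) (x y : node N) : Prop := F N x y > 0.

Definition nlt (N : PetriNet) : relation (node N) := clos_trans _ (flow N).
Definition nle (N : PetriNet) : relation (node N) := clos_refl_trans _ (flow N).

Definition causal_past (N : PetriNet) (S : node N -> Prop) : node N -> Prop :=
  fun y => exists x, S x /\ nle N y x.

Definition conflict (N : PetriNet) (x y : node N) : Prop :=
  exists (p : place N) (t1 t2 : trans N),
    inl p <> x /\ inl p <> y /\ t1 <> t2 /\
    Fpt N p t1 > 0 /\ Fpt N p t2 > 0 /\
    nle N (inr t1) x /\ nle N (inr t2) y.

Definition concurrent (N : PetriNet) (x y : node N) : Prop :=
  ~ nle N x y /\ ~ nle N y x /\ ~ conflict N x y.

Definition occurrence_net (N : PetriNet) : Prop :=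
  (* pre- and postconditions of transitions are sets *)
  (forall p t, Fpt N p t <= 1) /\ (forall t p, Ftp N t p <= 1) /\
  (forall p t1 t2, Ftp N t1 p > 0 -> Ftp N t2 p > 0 -> t1 = t2) /\
  (* In = { p | pre(p) = empty } (as a multiset: multiplicity 1 or 0) *)
  (forall p, (In N p = 1 /\ forall t, Ftp N t p = 0) \/
             (In N p = 0 /\ exists t, Ftp N t p > 0)) /\
  (* F^{-1} is well-founded: no infinite backward F-chain *)
  well_founded (flow N) /\
  (forall t, ~ conflict N (inr t) (inr t)).

Definition pairwise_concurrent (N : PetriNet) (C : place N -> Prop) : Prop :=
  forall p q, C p -> C q -> p <> q -> concurrent N (inl p) (inl q).

Definition cut (N : PetriNet) (C : place N -> Prop) : Prop :=
  pairwise_concurrent N C /\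
  forall D : place N -> Prop, pairwise_concurrent N D ->
    (forall p, C p -> D p) -> forall p, D p -> C p.

Definition as_nodes (N : PetriNet) (C : place N -> Prop) : node N -> Prop :=
  fun x => match x with inl p => C p | inr _ => False end.

Definition LKC (N : PetriNet) (c : place N) : place N -> Prop :=
  fun p => ~ nlt N (inl p) (inl c) /\
           forall t, Ftp N t p > 0 -> nlt N (inr t) (inl c).

(* Main.v *)
Require Import Defs.
From Stdlib Require Import Relations Classical Wellfounded.
Lemma clos_trans_clos_refl_trans_x {A} (R : relation A) x y : clos_trans A R x y -> clos_refl_trans A R x y.
Proof. induction 1; [now constructor|eapply rt_trans; eauto]. Qed.

Lemma rt_eq_t {A} (R : relation A) x y :
  clos_refl_trans A R x y -> x = y \/ clos_trans A R x y.
Proof.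
  induction 1.
  - right; now constructor.
  - now left.
  - destruct IHclos_refl_trans1 as [->|H1]; destruct IHclos_refl_trans2 as [->|H2]; auto.
    right; eapply t_trans; eauto.
Qed.

Lemma wf_irrefl {A} (R : relation A) : well_founded R -> forall x, ~ R x x.
Proof.
  intros Hwf x. induction (Hwf x) as [x _ IH]. intros Hx. exact (IH x Hx Hx).
Qed.

Lemma nlt_irrefl N : well_founded (flow N) -> forall x, ~ nlt N x x.
Proof.
  intros Hwf. apply wf_irrefl. apply wf_clos_trans. exact Hwf.
Qed.

Lemma into_place N x p : nlt N x (inl p) ->
  exists t, Ftp N t p > 0 /\ nle N x (inr t).
Proof.
  intros H. apply clos_trans_tn1_iff in H. inversion H; subst.
  - destruct x as [q|t]; [unfold flow, F in H0; simpl in H0; inversion H0|].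
    exists t. split; [exact H0|]. apply rt_refl.
  - destruct y as [q|t]; [unfold flow, F in H0; simpl in H0; inversion H0|].
    exists t. split; [exact H0|]. apply clos_trans_clos_refl_trans_x. apply clos_trans_tn1_iff. exact H1.
Qed.

Lemma nle_nlt N x y z : nle N x y -> nlt N y z -> nlt N x z.
Proof.
  intros H1 H2. destruct (rt_eq_t _ _ _ H1) as [->|H]; auto. eapply t_trans; eauto.
Qed.

Lemma conflict_sym N x y : conflict N x y -> conflict N y x.
Proof.
  intros (r & t1 & t2 & H1 & H2 & H3 & H4 & H5 & H6 & H7).
  exists r, t2, t1. repeat split; auto.
Qed.

Lemma concurrent_sym N x y : concurrent N x y -> concurrent N y x.
Proof.
  intros (H1 & H2 & H3). repeat split; auto. intros H; apply H3, conflict_sym, H.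
Qed.

Theorem mainTheorem17 (N : PetriNet) (C : place N -> Prop) (c : place N) :
  occurrence_net N -> cut N C -> C c ->
  forall p, LKC N c p -> causal_past N (as_nodes N C) (inl p).
Proof.
  intros (_ & _ & Huniq & _ & Hwf & Hself) [Hpc Hmax] Hc p [Hnlt Hpre].
  destruct (classic (causal_past N (as_nodes N C) (inl p))) as [H|H]; [exact H|].
  exfalso.
  assert (Lpq : forall q, C q -> concurrent N (inl p) (inl q)).
  { intros q Hq. split; [|split].
    - intros Hle. apply H. exists (inl q). split; [exact Hq|exact Hle].
    - intros Hle. destruct (rt_eq_t _ _ _ Hle) as [E|Hlt].
      + inversion E; subst. apply H. exists (inl p). split; [exact Hq|apply rt_refl].
      + destruct (into_place _ _ _ Hlt) as (t & Ht & Hqt).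
        pose proof (nle_nlt _ _ _ _ Hqt (Hpre t Ht)) as Hqc.
        destruct (classic (q = c)) as [->|Hne].
        * exact (nlt_irrefl N Hwf _ Hqc).
        * destruct (Hpc q c Hq Hc Hne) as (Hn & _ & _). apply Hn. apply clos_trans_clos_refl_trans_x. exact Hqc.
    - intros (r & t1 & t2 & Hrp & Hrq & Hne & H1 & H2 & Hle1 & Hle2).
      destruct (rt_eq_t _ _ _ Hle1) as [E|Hlt1]; [discriminate|].
      destruct (into_place _ _ _ Hlt1) as (t & Ht & Ht1t).
      pose proof (nle_nlt _ _ _ _ Ht1t (Hpre t Ht)) as Ht1c.
      assert (Hrc : (inl r : node N) <> inl c).
      { intros E. inversion E; subst. apply (nlt_irrefl N Hwf (inl c)).
        eapply t_trans; [apply t_step; instantiate (1 := inr t1); exact H1|exact Ht1c]. }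
      destruct (classic (q = c)) as [->|Hqc].
      + destruct (into_place _ _ _ Ht1c) as (u & Hu & Hu1).
        destruct (rt_eq_t _ _ _ Hle2) as [E|Hlt2]; [discriminate|].
        destruct (into_place _ _ _ Hlt2) as (u' & Hu' & Hu2).
        rewrite (Huniq c u' u Hu' Hu) in Hu2.
        apply (Hself u). exists r, t1, t2. repeat split; auto; discriminate.
      + destruct (Hpc c q Hc Hq (fun E => Hqc (eq_sym E))) as (_ & _ & Hn).
        apply Hn. exists r, t1, t2. repeat split; auto. apply clos_trans_clos_refl_trans_x. exact Ht1c. }
  set (D := fun x => C x \/ x = p).
  assert (HD : pairwise_concurrent N D).
  { intros x y [Hx|Ex] [Hy|Ey] Hxy; subst.
    - apply Hpc; auto.
    - apply concurrent_sym, Lpq, Hx.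
    - apply Lpq, Hy.
    - contradiction. }
  pose proof (Hmax D HD (fun q Hq => or_introl Hq) p (or_intror eq_refl)) as Cp.
  apply H. exists (inl p). split; [exact Cp|apply rt_refl].
Qed.
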